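(* Let $S$ be a densely defined symmetric operator on a Hilbert space $\mathcal{H}$ and $V\ge0$ a bounded everywhere defined non-negative operator. Let $\mathcal{V}\subset\mathcal{D}(S^* )$ be a subspace with $\mathcal{V}\cap\mathcal{D}(S)=\{0\}$, let $\mathcal{L}:\mathcal{V}\to\mathcal{H}$ be linear, let $S_{\mathcal{V},\mathcal{L}}$ be the operator with domain $\mathcal{D}(S)\dot{+}\mathcal{V}$ acting by $f+v\mapsto S^*(f+v)+\mathcal{L}v$, and let $S_{\mathcal{V}}:=S_{\mathcal{V},0}=S^*\upharpoonright_{\mathcal{D}(S)\dot{+}\mathcal{V}}$. (i) If $S_{\mathcal{V}}$ is symmetric, then $S_{\mathcal{V}}+iV$ is the only dissipative extension of $S+iV$ with domain equal to $\mathcal{D}(S_{\mathcal{V}})$. Moreover, if $\mathcal{L}\neq0$, there is no $\gamma\in\mathbb{R}^+$ such that $\mathrm{Im}\langle\psi,(S_{\mathcal{V},\mathcal{L}}+iV)\psi\rangle\ge-\gamma\|\psi\|^2$ for all $\psi\in\mathcal{D}(S_{\mathcal{V},\mathcal{L}})$. (ii) If there exists $v\in\mathcal{V}$ with $\mathrm{Im}\langle v,S_{\mathcal{V}}v\rangle<0$, then there exists no linear $\mathcal{L}:\mathcal{V}\to\mathcal{H}$ and no bounded non-negative operator $V\ge0$ such that $S_{\mathcal{V},\mathcal{L}}+iV$ is dissipative. (iii) If there exists $\varepsilon>0$ such that $\mathrm{Im}\langle v,S_{\mathcal{V}}v\rangle\ge\varepsilon\|v\|^2$ for all $v\in\mathcal{V}$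 and $\mathcal{L}$ is bounded, then $$\mathrm{Im}\langle\psi,S_{\mathcal{V},\mathcal{L}}\psi\rangle\ge-\frac{\|\mathcal{L}\|^2}{4\varepsilon}\|\psi\|^2\quad\text{for all }\psi\in\mathcal{D}(S_{\mathcal{V},\mathcal{L}}).$$ In particular, for any bounded $V\ge\frac{\|\mathcal{L}\|^2}{4\varepsilon}$ we get $\mathrm{Im}\langle\psi,(S_{\mathcal{V},\mathcal{L}}+iV)\psi\rangle\ge0$ for all $\psi\in\mathcal{D}(S_{\mathcal{V},\mathcal{L}})$.
   Context: The inner product is antilinear in the first argument. A densely defined operator $B$ is dissipative if $\mathrm{Im}\langle\psi,B\psi\rangle\ge0$ for all $\psi\in\mathcal{D}(B)$. An extension of $S+iV$ means an operator extending $S+iV$ defined on $\mathcal{D}(S)$. *)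

(* Defs.v *)
From HB Require Import structures.
From mathcomp Require Import all_boot all_order all_algebra.
From mathcomp Require Import boolp classical_sets reals.
From mathcomp Require Import complex.
Set Implicit Arguments. Unset Strict Implicit. Unset Printing Implicit Defensive.
Import Order.TTheory GRing.Theory Num.Theory.
Local Open Scope ring_scope.
Local Open Scope classical_set_scope.

Section Hilbert.
Variable R : realType.
Local Notation C := R[i].
Variable H : lmodType C.
Variable inner : H -> H -> C.  (* antilinear in 1st argument, linear in 2nd *)

Definition h_hnorm (x : H) : R := Num.sqrt (complex.Re (inner x x)).

Definition h_is_hilbert : Prop :=
  [/\ (forall x y z (a : C), inner x (a *: y + z) = a * inner x y + inner x z),
      (forall x y, inner y x = conjc (inner x y)),
      (forall x, 0 <= inner x x),
      (forall x, inner x x = 0 -> x = 0) &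
      (forall u : nat -> H,
         (forall e : R, 0 < e -> exists N, forall m n, (N <= m)%N -> (N <= n)%N ->
              h_hnorm (u m - u n) < e) ->
         exists l, forall e : R, 0 < e -> exists N, forall n, (N <= n)%N ->
              h_hnorm (u n - l) < e)].

Definition h_subspace (D : set H) : Prop :=
  D 0 /\ forall (a : C) x y, D x -> D y -> D (a *: x + y).

Definition h_linear_on (D : set H) (T : H -> H) : Prop :=
  forall (a : C) x y, D x -> D y -> T (a *: x + y) = a *: T x + T y.

Definition h_dense (D : set H) : Prop :=
  forall x (e : R), 0 < e -> exists y, D y /\ h_hnorm (x - y) < e.

Definition h_densely_defined (D : set H) (T : H -> H) : Prop :=
  [/\ h_subspace D, h_linear_on D T & h_dense D].

Definition h_symmetric (D : set H) (T : H -> H) : Prop :=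
  forall x y, D x -> D y -> inner (T x) y = inner x (T y).

Definition h_adj_dom (D : set H) (T : H -> H) : set H :=
  [set g | exists h, forall f, D f -> inner g (T f) = inner h f].
Definition h_adj (D : set H) (T : H -> H) (g : H) : H :=
  xget 0 [set h | forall f, D f -> inner g (T f) = inner h f].

Definition h_dsum (D Vs : set H) : set H :=
  [set x | exists f v, D f /\ Vs v /\ x = f + v].

Definition h_vpart (D Vs : set H) (x : H) : H :=
  xget 0 [set v | Vs v /\ D (x - v)].

Definition h_S_VL (D : set H) (S : H -> H) (Vs : set H) (L : H -> H) (x : H) : H :=
  h_adj D S x + L (h_vpart D Vs x).

Definition h_S_V (D : set H) (S : H -> H) (Vs : set H) (x : H) : H :=
  h_S_VL D S Vs (fun _ => 0) x.

Definition h_plus_iV (T W : H -> H) (x : H) : H := T x + (@Complex R 0 1) *: W x.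

Definition h_dissipative (D : set H) (B : H -> H) : Prop :=
  forall psi, D psi -> 0 <= complex.Im (inner psi (B psi)).

Definition h_bounded_op (W : H -> H) : Prop :=
  h_linear_on setT W /\ exists M : R, forall x, h_hnorm (W x) <= M * h_hnorm x.

Definition h_op_ge (W : H -> H) (c : R) : Prop :=
  forall x, (c * h_hnorm x ^+ 2)%:C%C <= inner x (W x).

Definition h_bounded_on (Vs : set H) (L : H -> H) : Prop :=
  exists M : R, forall v, Vs v -> h_hnorm (L v) <= M * h_hnorm v.
Definition h_opnorm_on (Vs : set H) (L : H -> H) : R :=
  sup [set h_hnorm (L v) | v in [set v | Vs v /\ h_hnorm v <= 1]].

End Hilbert.

(* Main.v *)
Require Import Defs.
From HB Require Import structures.
From mathcomp Require Import all_boot all_order all_algebra.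
From mathcomp Require Import boolp classical_sets reals.
From mathcomp Require Import complex.
From mathcomp Require Import ring lra.
Import Order.TTheory GRing.Theory Num.Theory.
Local Open Scope ring_scope.
Local Open Scope classical_set_scope.
Set Implicit Arguments. Unset Strict Implicit.

Section Basics.
Variables (R : realType) (H : lmodType R[i]) (inner : H -> H -> R[i]).
Hypothesis hil : h_is_hilbert inner.
Local Notation Re := complex.Re.
Local Notation Im := complex.Im.

Lemma ReD (a b : R[i]) : Re (a + b) = Re a + Re b. Proof. by case: a => ? ?; case: b => ? ?. Qed.
Lemma ImD (a b : R[i]) : Im (a + b) = Im a + Im b. Proof. by case: a => ? ?; case: b => ? ?. Qed.
Lemma ReN (a : R[i]) : Re (- a) = - Re a. Proof. by case: a. Qed.
Lemma ImN (a : R[i]) : Im (- a) = - Im a. Proof. by case: a. Qed.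
Lemma ReJ (a : R[i]) : Re (conjc a) = Re a. Proof. by case: a. Qed.
Lemma ImJ (a : R[i]) : Im (conjc a) = - Im a. Proof. by case: a. Qed.
Lemma ReiM (a : R[i]) : Re ('i%C * a) = - Im a. Proof. case: a => x y /=; lra. Qed.
Lemma ImiM (a : R[i]) : Im ('i%C * a) = Re a. Proof. case: a => x y /=; lra. Qed.
Lemma ReNiM (a : R[i]) : Re (- 'i%C * a) = Im a. Proof. case: a => x y /=; lra. Qed.
Lemma RerM (r : R) (a : R[i]) : Re (r%:C%C * a) = r * Re a. Proof. case: a => x y /=; lra. Qed.
Lemma ImrM (r : R) (a : R[i]) : Im (r%:C%C * a) = r * Im a. Proof. case: a => x y /=; lra. Qed.
Lemma conjr (r : R) : conjc (r%:C%C) = r%:C%C. Proof. by rewrite /= oppr0. Qed.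
Lemma conjiE : conjc ('i%C : R[i]) = - 'i%C. Proof. apply/eqP; rewrite eq_complex /=; apply/andP; split; apply/eqP; lra. Qed.
Lemma Im_addJ (a : R[i]) : Im (conjc a + a) = 0. Proof. by rewrite ImD ImJ addNr. Qed.
Lemma conjK (a : R[i]) : conjc (conjc a) = a. Proof. by case: a => x y /=; rewrite opprK. Qed.
Lemma conjD (a b : R[i]) : conjc (a + b) = conjc a + conjc b.
Proof. case: a => x y; case: b => z w /=. apply/eqP; rewrite eq_complex /=; apply/andP; split; apply/eqP; ring. Qed.
Lemma conjM (a b : R[i]) : conjc (a * b) = conjc a * conjc b.
Proof. case: a => x y; case: b => z w /=. apply/eqP; rewrite eq_complex /=; apply/andP; split; apply/eqP; ring. Qed.
Lemma conjN (a : R[i]) : conjc (- a) = - conjc a. Proof. by case: a. Qed.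
Lemma conj0 : conjc (0 : R[i]) = 0. Proof. by rewrite /= oppr0. Qed.

Let lin := let: And5 l _ _ _ _ := hil in l.
Let csym := let: And5 _ c _ _ _ := hil in c.
Let pos := let: And5 _ _ p _ _ := hil in p.
Let defi := let: And5 _ _ _ d _ := hil in d.

Lemma ip0r x : inner x 0 = 0.
Proof. have := lin x 0 0 1. rewrite scaler0 addr0 mul1r => h. apply: (@addrI _ (inner x 0)). by rewrite addr0 -h. Qed.
Lemma ipDr x y z : inner x (y + z) = inner x y + inner x z.
Proof. by have := lin x y z 1; rewrite scale1r mul1r. Qed.
Lemma ipZr x a y : inner x (a *: y) = a * inner x y.
Proof. by have := lin x y 0 a; rewrite addr0 ip0r addr0. Qed.
Lemma ipNr x y : inner x (- y) = - inner x y.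
Proof. by rewrite -scaleN1r ipZr mulN1r. Qed.
Lemma ipBr x y z : inner x (y - z) = inner x y - inner x z.
Proof. by rewrite ipDr ipNr. Qed.
Lemma ipC x y : inner y x = conjc (inner x y). Proof. exact: csym. Qed.
Lemma ipDl x y z : inner (x + y) z = inner x z + inner y z.
Proof. by rewrite ipC ipDr conjD -!ipC. Qed.
Lemma ipZl a x y : inner (a *: x) y = conjc a * inner x y.
Proof. by rewrite ipC ipZr conjM -ipC. Qed.
Lemma ip0l y : inner 0 y = 0.
Proof. by rewrite ipC ip0r conj0. Qed.
Lemma ipNl x y : inner (- x) y = - inner x y.
Proof. by rewrite ipC ipNr conjN -ipC. Qed.
Lemma ipBl x y z : inner (x - y) z = inner x z - inner y z.
Proof. by rewrite ipDl ipNl. Qed.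

Definition nrm x := Re (inner x x).
Lemma Im_xx x : Im (inner x x) = 0. Proof. exact: ger0_Im (pos x). Qed.
Lemma N_ge0 x : 0 <= nrm x.
Proof. have := pos x; rewrite lecE => /andP[_]. done. Qed.
Lemma xx_real x : inner x x = (nrm x)%:C%C.
Proof. rewrite /nrm; move: (Im_xx x); case: (inner x x) => a b /= ->. by []. Qed.
Lemma N0 x : nrm x = 0 -> x = 0.
Proof. move=> h; apply: defi. by rewrite xx_real h. Qed.
Lemma hn2 x : h_hnorm inner x ^+ 2 = nrm x.
Proof. by rewrite /h_hnorm sqr_sqrtr // N_ge0. Qed.
Lemma hn_ge0 x : 0 <= h_hnorm inner x. Proof. exact: sqrtr_ge0. Qed.
Lemma ReC x y : Re (inner y x) = Re (inner x y). Proof. by rewrite ipC ReJ. Qed.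
Lemma ImC x y : Im (inner y x) = - Im (inner x y). Proof. by rewrite ipC ImJ. Qed.
Lemma ND x y : nrm (x + y) = nrm x + nrm y + 2 * Re (inner x y).
Proof. rewrite /nrm ipDl !ipDr !ReD ReC. lra. Qed.
Lemma NN x : nrm (- x) = nrm x. Proof. by rewrite /nrm ipNl ipNr opprK. Qed.
Lemma NB x y : nrm (x - y) = nrm x + nrm y - 2 * Re (inner x y).
Proof. rewrite ND NN /nrm ipNr ReN. lra. Qed.
Lemma NZ (r : R) x : nrm (r%:C%C *: x) = r ^+ 2 * nrm x.
Proof. rewrite /nrm ipZl ipZr mulrA conjr -rmorphM RerM. by rewrite expr2. Qed.
Lemma NZi x : nrm ((- 'i%C) *: x) = nrm x.
Proof.
rewrite /nrm ipZl ipZr mulrA conjN conjiE opprK.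
have -> : 'i%C * - 'i%C = 1 :> R[i] by apply/eqP; rewrite eq_complex /=; apply/andP; split; apply/eqP; lra.
by rewrite mul1r.
Qed.
Lemma Im_as_Re x y : Im (inner x y) = Re (inner x ((- 'i%C) *: y)).
Proof. by rewrite ipZr ReNiM. Qed.
Lemma amgm (t : R) x y : 2 * t * Re (inner x y) <= t ^+ 2 * nrm x + nrm y.
Proof.
have := N_ge0 (t%:C%C *: x - y). rewrite NB NZ /nrm ipZl conjr RerM. lra.
Qed.
Lemma imgm (t : R) x y : 2 * t * Im (inner x y) <= t ^+ 2 * nrm x + nrm y.
Proof. by rewrite Im_as_Re -(NZi y); apply: amgm. Qed.

Lemma dense_N (D : set H) x (d : R) : h_dense inner D -> 0 < d -> exists f, D f /\ nrm (x - f) < d.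
Proof.
move=> hd d0. have [f [Df hf]] := hd x (Num.sqrt d) (ltac:(by rewrite sqrtr_gt0)).
exists f; split => //. by move: hf; rewrite /h_hnorm ltr_sqrt.
Qed.

Lemma N_le x y : nrm (x + y) <= 2 * nrm x + 2 * nrm y.
Proof. have := amgm 1 x y. rewrite ND expr1n mul1r. lra. Qed.

Lemma hn_sq_le x y (M : R) : h_hnorm inner y <= M * h_hnorm inner x -> nrm y <= M ^+ 2 * nrm x.
Proof.
move=> h. rewrite -!hn2. have := hn_ge0 x. have := hn_ge0 y. nra.
Qed.

End Basics.

Section Ops.
Variables (R : realType) (H : lmodType R[i]) (inner : H -> H -> R[i]).
Hypothesis hil : h_is_hilbert inner.
Local Notation Re := complex.Re.
Local Notation Im := complex.Im.
Local Notation nrm := (nrm inner).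
Variables (DS : set H) (S : H -> H).
Hypothesis hdd : h_densely_defined inner DS S.
Hypothesis hsym : h_symmetric inner DS S.
Local Notation A := (h_adj inner DS S).

Let hdense : h_dense inner DS. Proof. by case: hdd. Qed.
Let hsub : h_subspace DS. Proof. by case: hdd. Qed.
Let hlin : h_linear_on DS S. Proof. by case: hdd. Qed.

Lemma DS0 : DS 0. Proof. by case: hsub. Qed.
Lemma DSD f g : DS f -> DS g -> DS (f + g).
Proof. move=> hf hg; have := (proj2 hsub) 1 f g hf hg; by rewrite scale1r. Qed.
Lemma DSZ a f : DS f -> DS (a *: f).
Proof. move=> hf; have := (proj2 hsub) a f 0 hf DS0; by rewrite addr0. Qed.
Lemma DSN f : DS f -> DS (- f). Proof. by move=> hf; rewrite -scaleN1r; apply: DSZ. Qed.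

Lemma orth_zero h : (forall f, DS f -> inner h f = 0) -> h = 0.
Proof.
move=> hh; apply: (N0 hil); apply/eqP; rewrite eq_le N_ge0 // andbT.
rewrite leNgt; apply/negP => Np.
have [f [Df hf]] := dense_N h hdense Np.
have e : inner h h = inner h (h - f) by rewrite (ipBr hil) (hh f) // subr0.
have := amgm hil 1 h (h - f). rewrite -e expr1n !mul1r -/(nrm h). lra.
Qed.

Lemma adj_spec g h : (forall f, DS f -> inner g (S f) = inner h f) -> A g = h.
Proof.
move=> P; apply: xget_unique => // y Py; apply/eqP; rewrite -subr_eq0; apply/eqP.
apply: orth_zero => f Df; by rewrite (ipBl hil) -Py // -P // subrr.
Qed.

Lemma adj_P g : h_adj_dom inner DS S g -> forall f, DS f -> inner g (S f) = inner (A g) f.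
Proof. move=> hg; exact: (xgetPex 0 hg). Qed.

Lemma adj_S f : DS f -> A f = S f.
Proof. move=> Df; apply: adj_spec => g Dg; by rewrite hsym. Qed.

Lemma adj_sum f v : DS f -> h_adj_dom inner DS S v -> A (f + v) = S f + A v.
Proof.
move=> Df hv; apply: adj_spec => g Dg.
by rewrite !(ipDl hil) hsym // (adj_P hv Dg).
Qed.

Lemma Im_fSf f : DS f -> Im (inner f (S f)) = 0.
Proof.
move=> Df. have := hsym Df Df. rewrite (ipC hil f (S f)) => e.
move: (inner f (S f)) e => z; case: z => a b /= [] => e2. lra.
Qed.

Lemma cross f v : DS f -> h_adj_dom inner DS S v ->
  Im (inner (f + v) (A (f + v))) = Im (inner v (A v)).
Proof.
move=> Df hv. rewrite adj_sum // !(ipDl hil) !(ipDr hil) (adj_P hv Df).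
rewrite (ipC hil (A v) f) !ImD Im_fSf // ImJ. lra.
Qed.

Lemma key (K : R) v u : (forall f, DS f -> 0 <= Im (inner (f + v) u) + K * nrm (f + v)) -> u = 0.
Proof.
move=> hk. apply: (N0 hil). set a := nrm u.
have a0 : 0 <= a by apply: N_ge0.
rewrite le_eqVlt in a0; case/orP: a0 => [/eqP <- // | a0]. exfalso.
set m := 8 * (`|K| + 1).
have m0 : 0 < m by rewrite /m; have := normr_ge0 K; lra.
set w := - ((- 'i%C) *: u).
have Nw : nrm w = a by rewrite /w (NN hil) (NZi hil).
have Imw : Im (inner w u) = - a.
  rewrite /w (ipNl hil) (ipZl hil) conjN conjiE opprK ImN (xx_real hil) /=. lra.
set g := (m^-1)%:C%C *: w.
have Ng : nrm g = m^-2 * a by rewrite /g (NZ hil) Nw exprVn.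
have Img : Im (inner g u) = - (m^-1 * a) by rewrite /g (ipZl hil) conjr ImrM Imw mulrN.
have d0 : 0 < a / (16 * m ^+ 2) by apply: divr_gt0 => //; apply: mulr_gt0 => //; apply: exprn_gt0.
have [f [Df hf]] := dense_N (g - v) hdense d0.
set e := f + v - g.
have Ne : nrm e < a / (16 * m ^+ 2).
  have -> : e = - (g - v - f) by rewrite /e opprB opprB addrA. 
  by rewrite (NN hil).
have fve : f + v = g + e by rewrite /e addrCA subrr addr0.
have h1 := hk f Df. rewrite fve (ipDl hil) ImD Img in h1.
set X := Im (inner e u) in h1.
set G := nrm (g + e) in h1.
set E := nrm e in Ne.
have G0 : 0 <= G by apply: N_ge0.
have hKG : K * G <= m / 8 * G.
  apply: ler_wpM2r => //. rewrite /m. have := ler_norm K. lra.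
have h2 := imgm hil (4 * m) e u. rewrite -/X -/E -/a in h2.
have h4 : G <= 2 * (m^-2 * a) + 2 * E by rewrite /G -Ng; apply: (N_le hil).
have mX : 0 <= - a + m * X + m ^+ 2 * G / 8.
  have : 0 <= m * (- (m^-1 * a) + X + m / 8 * G) by apply: mulr_ge0; lra.
  have -> : m * (- (m^-1 * a) + X + m / 8 * G) = - a + m * X + m ^+ 2 * G / 8.
    field. lra.
  done.
have h4' : m ^+ 2 * G <= 2 * a + 2 * (m ^+ 2 * E).
  have : m ^+ 2 * G <= m ^+ 2 * (2 * (m^-2 * a) + 2 * E).
    apply: ler_wpM2l => //; exact: sqr_ge0.
  have -> : m ^+ 2 * (2 * (m^-2 * a) + 2 * E) = 2 * a + 2 * (m ^+ 2 * E).
    field. lra.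
  done.
have h3 : 16 * (m ^+ 2 * E) < a.
  have mm : 0 < 16 * m ^+ 2 by apply: mulr_gt0 => //; apply: exprn_gt0.
  move: Ne; rewrite ltr_pdivlMr // => Ne. lra.
have h2' : 8 * (m * X) <= 16 * (m ^+ 2 * E) + a.
  move: h2. have -> : (4 * m) ^+ 2 * E = 16 * (m ^+ 2 * E) by rewrite exprMn; lra.
  lra.
lra.
Qed.

End Ops.

Lemma zm1 (V : zmodType) (a b c : V) : a - (a + b - c) = c - b.
Proof. by rewrite opprB addrA opprD addrACA subrr add0r. Qed.
Lemma zm2 (V : zmodType) (a b c d e : V) : a + b + c = (a + d) + (b + e) + (c - (d + e)).
Proof. by rewrite [(a + d) + (b + e)]addrACA -(addrA (a + b) (d + e)) (addrC (d + e) (c - (d + e))) subrK. Qed.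

Section Main.
Variables (R : realType) (H : lmodType R[i]) (inner : H -> H -> R[i]).
Hypothesis hil : h_is_hilbert inner.
Local Notation Re := complex.Re.
Local Notation Im := complex.Im.
Local Notation nrm := (nrm inner).
Variables (DS : set H) (S : H -> H) (Vs : set H).
Hypothesis hdd : h_densely_defined inner DS S.
Hypothesis hsym : h_symmetric inner DS S.
Hypothesis hVs : h_subspace Vs.
Hypothesis hadj : Vs `<=` h_adj_dom inner DS S.
Hypothesis hcap : Vs `&` DS = [set 0].
Local Notation A := (h_adj inner DS S).

Lemma VsZ a v : Vs v -> Vs (a *: v).
Proof. move=> hv; have := (proj2 hVs) a v 0 hv (proj1 hVs); by rewrite addr0. Qed.
Lemma VsD v w : Vs v -> Vs w -> Vs (v + w).
Proof. move=> hv hw; have := (proj2 hVs) 1 v w hv hw; by rewrite scale1r. Qed.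

Lemma vpartE f v : DS f -> Vs v -> h_vpart DS Vs (f + v) = v.
Proof.
move=> Df Vv; apply: xget_unique; first by split => //; rewrite addrK.
move=> y [Vy Dy].
have h1 : (Vs `&` DS) (y - v).
  split; first by apply: VsD => //; rewrite -scaleN1r; apply: VsZ.
  rewrite -(zm1 f). apply: (DSD hdd) => //. exact: (DSN hdd).
move: h1; rewrite hcap => /= /eqP; rewrite subr_eq0 => /eqP //.
Qed.

Lemma linT0 (W : H -> H) : h_linear_on setT W -> W 0 = 0.
Proof.
move=> hW; have := hW 1 0 0 I I; rewrite !scale1r addr0 => h.
by apply: (@addrI _ (W 0)); rewrite addr0 -h.
Qed.
Lemma linTD (W : H -> H) x y : h_linear_on setT W -> W (x + y) = W x + W y.
Proof. by move=> hW; have := hW 1 x y I I; rewrite !scale1r. Qed.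

Lemma bounded_K (W : H -> H) : h_bounded_op inner W ->
  exists K : R, forall x, Re (inner x (W x)) <= K * nrm x.
Proof.
case=> _ [M hM]. exists ((1 + M ^+ 2) / 2) => x.
have h1 := amgm hil 1 x (W x). have h2 := hn_sq_le hil (hM x). lra.
Qed.

Lemma Im_iW x y : Im (inner x ('i%C *: y)) = Re (inner x y).
Proof. by rewrite (ipZr hil) ImiM. Qed.

Lemma op_ge_Re (W : H -> H) c x : h_op_ge inner W c -> c * nrm x <= Re (inner x (W x)).
Proof. move=> /(_ x); rewrite lecE => /andP[_]; by rewrite /= (hn2 hil). Qed.

Lemma DinD f v : DS f -> Vs v -> h_dsum DS Vs (f + v).
Proof. by move=> Df Vv; exists f, v. Qed.

Lemma expand_VL (L W : H -> H) f v : DS f -> Vs v ->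
  Im (inner (f + v) (h_plus_iV (h_S_VL inner DS S Vs L) W (f + v))) =
  Im (inner v (A v)) + Im (inner (f + v) (L v)) + Re (inner (f + v) (W (f + v))).
Proof.
move=> Df Vv. rewrite /h_plus_iV /h_S_VL vpartE // !(ipDr hil) !ImD Im_iW cross //.
exact: hadj.
Qed.

Lemma expand_L (L : H -> H) f v : DS f -> Vs v ->
  Im (inner (f + v) (h_S_VL inner DS S Vs L (f + v))) =
  Im (inner v (A v)) + Im (inner (f + v) (L v)).
Proof.
move=> Df Vv. rewrite /h_S_VL vpartE // !(ipDr hil) !ImD cross //.
exact: hadj.
Qed.

Lemma SV_at_v v : h_S_V inner DS S Vs v = A v.
Proof. by rewrite /h_S_V /h_S_VL addr0. Qed.


Lemma DvD v : Vs v -> h_dsum DS Vs v.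
Proof. move=> Vv; rewrite -(add0r v); apply: DinD => //; exact: (DS0 hdd). Qed.
Lemma DfD f : DS f -> h_dsum DS Vs f.
Proof. move=> Df; rewrite -(addr0 f); apply: DinD => //; exact: (proj1 hVs). Qed.

Lemma Im_Av0 v : h_symmetric inner (h_dsum DS Vs) (h_S_V inner DS S Vs) -> Vs v ->
  Im (inner v (A v)) = 0.
Proof.
move=> hs Vv. have := hs v v (DvD Vv) (DvD Vv). rewrite SV_at_v (ipC hil v (A v)) => e.
move: (inner v (A v)) e => z; case: z => a b /= [] => e2. lra.
Qed.

Lemma part_ia (V : H -> H) : h_bounded_op inner V ->
  h_symmetric inner (h_dsum DS Vs) (h_S_V inner DS S Vs) ->
  forall B : H -> H,
    h_linear_on (h_dsum DS Vs) B ->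
    (forall f, DS f -> B f = h_plus_iV S V f) ->
    h_dissipative inner (h_dsum DS Vs) B ->
    forall psi, h_dsum DS Vs psi -> B psi = h_plus_iV (h_S_V inner DS S Vs) V psi.
Proof.
move=> hVb hs B hB hBS hdis psi [f [v [Df [Vv ->]]]].
have hVl : h_linear_on setT V by case: hVb.
have [K hK] := bounded_K hVb.
have Bd : forall g, DS g -> B (g + v) = A (g + v) + 'i%C *: V (g + v) + (B v - (A v + 'i%C *: V v)).
  move=> g Dg. have := hB 1 g v (DfD Dg) (DvD Vv). rewrite !scale1r => ->.
  rewrite hBS // /h_plus_iV (adj_sum hil hdd hsym Dg (hadj Vv)) (linTD _ _ hVl) scalerDr.
  exact: zm2.
have u0 : B v - (A v + 'i%C *: V v) = 0.
  apply: (key hil hdd (K := K) (v := v)) => g Dg.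
  have := hdis (g + v) (DinD Dg Vv). rewrite Bd // !(ipDr hil) !ImD Im_iW.
  rewrite (cross hil hdd hsym Dg (hadj Vv)) Im_Av0 //.
  have := hK (g + v). lra.
rewrite Bd // u0 addr0 /h_plus_iV /h_S_V /h_S_VL addr0 //.
Qed.

Lemma part_ib (V L : H -> H) : h_bounded_op inner V ->
  h_symmetric inner (h_dsum DS Vs) (h_S_V inner DS S Vs) ->
  (exists v, Vs v /\ L v <> 0) ->
  ~ exists gamma : R, 0 < gamma /\
      forall psi, h_dsum DS Vs psi ->
        - gamma * h_hnorm inner psi ^+ 2 <=
        Im (inner psi (h_plus_iV (h_S_VL inner DS S Vs L) V psi)).
Proof.
move=> hVb hs [v [Vv Lv]] [gam [g0 hg]]. apply: Lv.
have [K hK] := bounded_K hVb.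
apply: (key hil hdd (K := K + gam) (v := v)) => g Dg.
have := hg (g + v) (DinD Dg Vv). rewrite expand_VL // Im_Av0 // (hn2 hil).
have := hK (g + v). lra.
Qed.

Lemma part_ii (L' V' : H -> H) :
  (exists v, Vs v /\ Im (inner v (h_S_V inner DS S Vs v)) < 0) ->
  h_bounded_op inner V' ->
  ~ h_dissipative inner (h_dsum DS Vs) (h_plus_iV (h_S_VL inner DS S Vs L') V').
Proof.
move=> [v [Vv hv]] hVb hdis. rewrite SV_at_v in hv.
set c := - Im (inner v (A v)).
have c0 : 0 < c by rewrite /c; lra.
have [K hK] := bounded_K hVb.
set K' := `|K| + 1.
have K'0 : 0 < K' by rewrite /K'; have := normr_ge0 K; lra.
set w := L' v.
set n := nrm w.
have n0 : 0 <= n by apply: N_ge0.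
set T := (4 * n + 4) / c.
have T0 : 0 < T by apply: divr_gt0 => //; lra.
have d0 : 0 < c / (T + 2 * K') by apply: divr_gt0 => //; lra.
have hden : h_dense inner DS by case: hdd.
have [g [Dg hg]] := dense_N (- v) hden d0.
have eps : - v - g = - (g + v) by rewrite opprD addrC.
rewrite eps (NN hil) in hg.
have := hdis (g + v) (DinD Dg Vv). rewrite expand_VL // -/w.
set X := Im (inner (g + v) w). set P := nrm (g + v) in hg *.
have P0 : 0 <= P by apply: N_ge0.
have hKP : K * P <= K' * P by apply: ler_wpM2r => //; rewrite /K'; have := ler_norm K; lra.
have hRe := hK (g + v). rewrite -/P in hRe.
have f2 : X <= T * P / 2 + c / 8.
  have h2 := imgm hil T (g + v) w. rewrite -/X -/P -/n in h2.
  have : 2 * T * X <= 2 * T * (T * P / 2 + c / 8).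
    have -> : 2 * T * (T * P / 2 + c / 8) = T ^+ 2 * P + (n + 1).
      rewrite /T. field. exact: (lt0r_neq0 c0).
    lra.
  move=> hh; rewrite -(@ler_pM2l _ (2 * T)) //; lra.
have hc : Im (inner v (A v)) = - c by rewrite /c opprK.
rewrite hc. move: hg. rewrite ltr_pdivlMr; last lra.
clearbody T K' n w c X P. nra.
Qed.


Lemma hn0 : h_hnorm inner 0 = 0.
Proof. by rewrite /h_hnorm (ip0l hil) sqrtr0. Qed.

Lemma hnZ (r : R) x : h_hnorm inner (r%:C%C *: x) = `|r| * h_hnorm inner x.
Proof.
rewrite /h_hnorm -/(nrm _) (NZ hil) sqrtrM ?sqr_ge0 // sqrtr_sqr //.
Qed.

Lemma opnorm_prop (L : H -> H) : h_linear_on Vs L -> h_bounded_on inner Vs L ->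
  0 <= h_opnorm_on inner Vs L /\
  forall v, Vs v -> h_hnorm inner (L v) <= h_opnorm_on inner Vs L * h_hnorm inner v.
Proof.
move=> hL [M hM].
have L0 : L 0 = 0.
  have := hL 1 0 0 (proj1 hVs) (proj1 hVs). rewrite !scale1r addr0 => h.
  by apply: (@addrI _ (L 0)); rewrite addr0 -h.
set E := [set h_hnorm inner (L v) | v in [set v | Vs v /\ h_hnorm inner v <= 1]].
have hs : has_sup E.
  split; first by exists (h_hnorm inner (L 0)), 0 => //; split; [exact: (proj1 hVs) | rewrite hn0 ler01].
  exists `|M| => _ [w [Vw hw] <-].
  apply: le_trans (hM w Vw) _.
  have := @hn_ge0 _ _ inner w. have := ler_norm M. have := normr_ge0 M. nra.
have ub := sup_upper_bound hs.
have l0 : 0 <= h_opnorm_on inner Vs L.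
  apply: le_trans (ub _ _); first by apply: (@hn_ge0 _ _ inner (L 0)).
  by exists 0 => //; split; [exact: (proj1 hVs) | rewrite hn0 ler01].
split => // v Vv.
have := @hn_ge0 _ _ inner v; rewrite le_eqVlt => /orP[/eqP h0|hp].
  have : nrm v = 0 by rewrite -(hn2 hil) -h0 expr0n.
  move/(N0 hil) => ->. by rewrite L0 hn0 mulr0.
set a := (h_hnorm inner v)^-1.
have a0 : 0 < a by rewrite /a invr_gt0.
set w := a%:C%C *: v.
have Vw : Vs w by apply: VsZ.
have hw : h_hnorm inner w = 1 by rewrite /w hnZ gtr0_norm // /a mulVf // gt_eqF.
have Lw : L w = a%:C%C *: L v.
  have := hL (a%:C%C) v 0 Vv (proj1 hVs). by rewrite !addr0 L0 addr0.
have := ub (h_hnorm inner (L w)) (ltac:(exists w => //; split => //; rewrite hw)).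
rewrite Lw hnZ gtr0_norm // /a.
rewrite mulrC -ler_pdivlMr //.
by move=> /(_ (lexx _)); rewrite invrK.
Qed.

Lemma part_iiia (L : H -> H) (eps : R) : h_linear_on Vs L -> 0 < eps ->
  (forall v, Vs v -> eps * h_hnorm inner v ^+ 2 <= Im (inner v (h_S_V inner DS S Vs v))) ->
  h_bounded_on inner Vs L ->
  forall psi, h_dsum DS Vs psi ->
    - (h_opnorm_on inner Vs L ^+ 2 / (4 * eps)) * h_hnorm inner psi ^+ 2 <=
    Im (inner psi (h_S_VL inner DS S Vs L psi)).
Proof.
move=> hL e0 heps hb psi [f [v [Df [Vv ->]]]].
have [l0 hl] := opnorm_prop hL hb.
set l := h_opnorm_on inner Vs L in l0 hl *.
rewrite expand_L // (hn2 hil).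
have h1 := heps v Vv. rewrite SV_at_v (hn2 hil) in h1.
have h2 : nrm (L v) <= l ^+ 2 * nrm v by apply: (hn_sq_le hil); apply: hl.
set q := l ^+ 2 / (4 * eps).
have q0 : 0 <= q by apply: divr_ge0; [exact: sqr_ge0 | lra].
have hlq : l ^+ 2 = 4 * q * eps by rewrite /q; field; lra.
rewrite hlq in h2.
set X := Im (inner (f + v) (L v)).
set P := nrm (f + v).
have P0 : 0 <= P by apply: N_ge0.
have Nv0 : 0 <= nrm v by apply: N_ge0.
have h3 := imgm hil (- (2 * q)) (f + v) (L v). rewrite -/X -/P in h3.
have m0 : 0 <= nrm (L v) by apply: N_ge0.
rewrite le_eqVlt in q0; case/orP: q0 => [/eqP q0 | q0].
  have Lv0 : L v = 0.
    apply: (N0 hil); apply/eqP; rewrite eq_le m0 andbT. move: h2. by rewrite -q0 mulr0 !mul0r.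
  rewrite /X Lv0 (ip0r hil) /= -q0. have := heps v Vv. rewrite SV_at_v. 
  have := @hn_ge0 _ _ inner v. nra.
move: h1 h2 h3. clearbody q X P. rewrite -/(nrm v) => h1 h2 h3.
have h4 : 4 * q * (- X) <= 4 * q * (q * P + Im (inner v (A v))) by nra.
rewrite ler_pM2l in h4; last lra. lra.
Qed.

Lemma part_iiib (L : H -> H) (eps : R) : h_linear_on Vs L -> 0 < eps ->
  (forall v, Vs v -> eps * h_hnorm inner v ^+ 2 <= Im (inner v (h_S_V inner DS S Vs v))) ->
  h_bounded_on inner Vs L ->
  forall W : H -> H, h_bounded_op inner W ->
    h_op_ge inner W (h_opnorm_on inner Vs L ^+ 2 / (4 * eps)) ->
    forall psi, h_dsum DS Vs psi ->
      0 <= Im (inner psi (h_plus_iV (h_S_VL inner DS S Vs L) W psi)).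
Proof.
move=> hL e0 heps hb W hW hge psi Dpsi.
have h1 := part_iiia hL e0 heps hb Dpsi.
have h2 := op_ge_Re psi hge.
rewrite /h_plus_iV (ipDr hil) ImD Im_iW. rewrite (hn2 hil) in h1. lra.
Qed.
End Main.
Unset Implicit Arguments.
Theorem corollary6p5 (R : realType) (H : lmodType R[i]) (inner : H -> H -> R[i])
  (DS : set H) (S : H -> H) (V : H -> H) (Vs : set H) (L : H -> H) :
  h_is_hilbert inner ->
  h_densely_defined inner DS S -> h_symmetric inner DS S ->
  h_bounded_op inner V -> h_op_ge inner V 0 ->
  h_subspace Vs -> Vs `<=` h_adj_dom inner DS S -> Vs `&` DS = [set 0] ->
  h_linear_on Vs L ->
  let D := h_dsum DS Vs in
  (* (i) *)
  (h_symmetric inner D (h_S_V inner DS S Vs) ->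
     (forall B : H -> H,
        h_linear_on D B ->
        (forall f, DS f -> B f = h_plus_iV S V f) ->
        h_dissipative inner D B ->
        forall psi, D psi -> B psi = h_plus_iV (h_S_V inner DS S Vs) V psi)
     /\ ((exists v, Vs v /\ L v <> 0) ->
         ~ exists gamma : R, 0 < gamma /\
             forall psi, D psi ->
               - gamma * h_hnorm inner psi ^+ 2 <=
               complex.Im (inner psi (h_plus_iV (h_S_VL inner DS S Vs L) V psi))))
  /\
  (* (ii) *)
  ((exists v, Vs v /\ complex.Im (inner v (h_S_V inner DS S Vs v)) < 0) ->
     forall (L' : H -> H) (V' : H -> H),
       h_linear_on Vs L' -> h_bounded_op inner V' -> h_op_ge inner V' 0 ->
       ~ h_dissipative inner D (h_plus_iV (h_S_VL inner DS S Vs L') V'))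
  /\
  (* (iii) *)
  (forall eps : R, 0 < eps ->
     (forall v, Vs v -> eps * h_hnorm inner v ^+ 2 <= complex.Im (inner v (h_S_V inner DS S Vs v))) ->
     h_bounded_on inner Vs L ->
     (forall psi, D psi ->
        - (h_opnorm_on inner Vs L ^+ 2 / (4 * eps)) * h_hnorm inner psi ^+ 2 <=
        complex.Im (inner psi (h_S_VL inner DS S Vs L psi)))
     /\ (forall W : H -> H, h_bounded_op inner W ->
           h_op_ge inner W (h_opnorm_on inner Vs L ^+ 2 / (4 * eps)) ->
           forall psi, D psi ->
             0 <= complex.Im (inner psi (h_plus_iV (h_S_VL inner DS S Vs L) W psi)))).
Proof.
move=> hil hdd hsym hVb hV0 hVs hadj hcap hL D.
split; [|split].
- move=> hs; split.
  + move=> B hB hBS hdis psi Dpsi.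
    exact: (part_ia hil hdd hsym hVs hadj hVb hs hB hBS hdis Dpsi).
  + exact: (part_ib hil hdd hsym hVs hadj hcap hVb hs).
- move=> hv L' V' _ hVb' _.
  exact: (part_ii hil hdd hsym hVs hadj hcap hv hVb').
- move=> eps e0 heps hb; split.
  + exact: (part_iiia hil hdd hsym hVs hadj hcap hL e0 heps hb).
  + exact: (part_iiib hil hdd hsym hVs hadj hcap hL e0 heps hb).
Qed.
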